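(* Let $(X,G)$ be a dislocation space with $X$ a reflexive Banach space, and let $(u_n)$ be a bounded sequence in $X$. Suppose that sequences $(g^{(1)}_n),(g^{(2)}_n)\subset G$ and $w^{(1)},w^{(2)}\in X$ satisfy $(g^{(1)}_n)^{-1}u_n\to w^{(1)}$ weakly in $X$ and $(g^{(2)}_n)^{-1}(u_n-g^{(1)}_nw^{(1)})\to w^{(2)}$ weakly in $X$, with $w^{(2)}\neq0$. Then $(g^{(1)}_n)^{-1}g^{(2)}_n\rightharpoonup 0$ operator-weakly as $n\to\infty$.
   Context: Dislocation space: a Banach space $X$ with a group $G\subset\mathcal{B}(X)$ (under composition) of bijective linear isometries such that (1) every $(g_n)\subset G$ with $g_n\not\rightharpoonup0$ has an operator-strongly convergent subsequence (limit in $\mathcal{B}(X)$), and (2) for every $(g_n)\subset G$ with $g_n\not\rightharpoonup0$ and every $(u_n)\subset X$ with $u_n\to0$ weakly, there is a subsequence with $g_{n_j}u_{n_j}\to0$ weakly. Here $A_n\rightharpoonup A$ (operator-weakly) means $A_nu\to Au$ weakly for all $u\in X$, and operator-strong convergence means $A_nu\to Au$ in norm for all $u$. *)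

(* Defs.v *)
From HB Require Import structures.
From mathcomp Require Import all_boot all_order all_algebra.
From mathcomp Require Import all_classical all_reals all_analysis.
Set Implicit Arguments. Unset Strict Implicit. Unset Printing Implicit Defensive.
Import Order.TTheory GRing.Theory Num.Theory.
Import numFieldNormedType.Exports.
Local Open Scope classical_set_scope.
Local Open Scope ring_scope.

Section Dislocation.
Variables (R : realType) (X : completeNormedModType R).

Definition lin_op (A : X -> X) : Prop :=
  forall (a : R) (x y : X), A (a *: x + y) = a *: A x + A y.

Definition bounded_op (A : X -> X) : Prop :=
  lin_op A /\ exists C : R, forall x, `|A x| <= C * `|x|.

Definition cont_lin_functional (f : X -> R) : Prop :=
  (forall (a : R) (x y : X), f (a *: x + y) = a * f x + f y) /\ continuous f.

Definition weak_cvg (u : nat -> X) (w : X) : Prop :=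
  forall f, cont_lin_functional f -> (fun n => f (u n)) @ \oo --> f w.

Definition op_weak_cvg (A : nat -> X -> X) (B : X -> X) : Prop :=
  forall u, weak_cvg (fun n => A n u) (B u).

Definition op_strong_cvg (A : nat -> X -> X) (B : X -> X) : Prop :=
  forall u, (fun n => A n u) @ \oo --> B u.

(* X is reflexive: every bounded linear functional on X^* (bounded w.r.t. the
   dual norm ||f|| = inf {M >= 0 | forall x, |f x| <= M ||x||}) is evaluation
   at some point of X. *)
Definition reflexive_space : Prop :=
  forall Phi : (X -> R) -> R,
    (forall (a : R) f g, cont_lin_functional f -> cont_lin_functional g ->
       Phi (fun x => a * f x + g x) = a * Phi f + Phi g) ->
    (exists C : R, forall f (M : R), cont_lin_functional f -> 0 <= M ->
       (forall x, `|f x| <= M * `|x|) -> `|Phi f| <= C * M) ->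
    exists x0 : X, forall f, cont_lin_functional f -> Phi f = f x0.

Definition isometry_group (G : set (X -> X)) : Prop :=
  [/\ id \in G,
      (forall g, g \in G -> [/\ lin_op g, forall x, `|g x| = `|x| & bijective g]),
      (forall g h, g \in G -> h \in G -> (g \o h) \in G) &
      (forall g h, g \in G -> cancel g h -> cancel h g -> h \in G)].

Definition subseq_idx (phi : nat -> nat) : Prop :=
  forall m n, (m < n)%N -> (phi m < phi n)%N.

Definition dislocation_space (G : set (X -> X)) : Prop :=
  [/\ isometry_group G,
      (forall g : nat -> X -> X, (forall n, g n \in G) ->
         ~ op_weak_cvg g (fun _ => 0) ->
         exists phi, subseq_idx phi /\
           exists A, bounded_op A /\ op_strong_cvg (fun j => g (phi j)) A) &
      (forall (g : nat -> X -> X) (u : nat -> X), (forall n, g n \in G) ->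
         ~ op_weak_cvg g (fun _ => 0) -> weak_cvg u 0 ->
         exists phi, subseq_idx phi /\
           weak_cvg (fun j => g (phi j) (u (phi j))) 0)].

End Dislocation.

(* Main.v *)
Require Import Defs.
From HB Require Import structures.
From mathcomp Require Import all_boot all_order all_algebra.
From mathcomp Require Import all_classical all_reals all_analysis.
From mathcomp Require Import ring lra.
Import Order.TTheory GRing.Theory Num.Theory.
Import numFieldNormedType.Exports.
Local Open Scope classical_set_scope.
Local Open Scope ring_scope.

Section HBsec.
Variables (R : realType) (X : normedModType R) (w : X).

Definition lin_closed (S : set (X * R)) := forall (c : R) x a y b,
  S (x, a) -> S (y, b) -> S (c *: x + y, c * a + b).
Definition functional (S : set (X * R)) := forall x a b, S (x, a) -> S (x, b) -> a = b.
Definition dominated (S : set (X * R)) := forall x a, S (x, a) -> a <= `|x|.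
Definition good (S : set (X * R)) :=
  [/\ S (w, `|w|), lin_closed S, functional S & dominated S].

Lemma good0 S : good S -> S (0, 0).
Proof.
case=> Sw Sl _ _; have := Sl (-1) _ _ _ _ Sw Sw.
by rewrite scaleN1r addNr mulN1r addNr.
Qed.

Lemma chain_ok (F : set (set (X * R))) :
  F `<=` (fun S => S = set0 \/ good S) -> total_on F subset ->
  (fun S => S = set0 \/ good S) (\bigcup_(S in F) S).
Proof.
move=> FP Ftot.
have gF S p : F S -> S p -> good S.
  move=> FS Sp; case: (FP S FS) => // S0; by rewrite S0 in Sp.
have [[p [S FS Sp]]|nU] := pselect (exists p, (\bigcup_(S in F) S) p); last first.
  by left; apply/seteqP; split => // p Up; apply: nU; exists p.
right; have gS := gF _ _ FS Sp.
split.
- by exists S => //; case: gS.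
- move=> c x a y b [S1 F1 S1x] [S2 F2 S2y].
  have g1 := gF _ _ F1 S1x; have g2 := gF _ _ F2 S2y.
  case: (Ftot _ _ F1 F2) => sub.
  + exists S2 => //; case: g2 => _ l _ _; exact: l (sub _ S1x) S2y.
  + exists S1 => //; case: g1 => _ l _ _; exact: l S1x (sub _ S2y).
- move=> x a b [S1 F1 S1x] [S2 F2 S2y].
  have g1 := gF _ _ F1 S1x; have g2 := gF _ _ F2 S2y.
  case: (Ftot _ _ F1 F2) => sub.
  + case: g2 => _ _ f _; exact: f (sub _ S1x) S2y.
  + case: g1 => _ _ f _; exact: f S1x (sub _ S2y).
- move=> x a [S1 F1 S1x]; have [_ _ _ d] := gF _ _ F1 S1x; exact: d.
Qed.


Lemma extend A z : good A -> ~ (exists a, A (z, a)) ->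
  exists B, A `<` B /\ good B.
Proof.
move=> gA nz; have A0 := good0 A gA; case: gA => Aw Al Af Ad.
have Asc k x a : A (x, a) -> A (k *: x, k * a).
  by move=> h; have := Al k _ _ _ _ h A0; rewrite !addr0.
have key x a y b : A (x, a) -> A (y, b) -> a - `|x - z| <= `|y + z| - b.
  move=> Ax Ay; have := Ad _ _ (Al 1 _ _ _ _ Ax Ay); rewrite scale1r mul1r => h.
  have : `|x + y| <= `|x - z| + `|y + z|.
    have -> : x + y = (x - z) + (y + z) by rewrite addrACA addNr addr0.
    exact: ler_normD.
  lra.
pose E := [set r : R | exists x a, A (x, a) /\ r = a - `|x - z|].
have E0 : E !=set0 by exists (`|w| - `|w - z|); exists w, `|w|.
have Eub : ubound E (`|w + z| - `|w|).
  by move=> r [x [a [Ax ->]]]; exact: key.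
have hasE : has_sup E by split => //; exists (`|w + z| - `|w|).
pose c := sup E.
have c_ge x a : A (x, a) -> a - `|x - z| <= c.
  by move=> Ax; apply: sup_upper_bound => //; exists x, a.
have c_le y b : A (y, b) -> c <= `|y + z| - b.
  move=> Ay; apply: ge_sup => // r [x [a [Ax ->]]]; exact: key.
pose B := [set p : X * R | exists x a t, A (x, a) /\ p.1 = x + t *: z /\ p.2 = a + t * c].
exists B; split.
  split.
    by move=> [x a] Ax; exists x, a, 0; rewrite scale0r addr0 mul0r addr0.
  move=> BA; apply: nz; exists c; apply: BA; exists 0, 0, 1.
  by rewrite scale1r add0r mul1r add0r.
split.
- by exists w, `|w|, 0; rewrite scale0r addr0 mul0r addr0.
- move=> k _ _ _ _ [x [a [t [Ax [/= -> ->]]]]] [y [b [s [Ay [/= -> ->]]]]].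
  exists (k *: x + y), (k * a + b), (k * t + s); split; first exact: Al.
  split => /=; last by ring.
  by rewrite scalerDr scalerA scalerDl addrACA.
- move=> p0 a0 b0 [x [a [t [Ax [/= e1 ->]]]]] [y [b [s [Ay [/= e3 ->]]]]].
  have [ts|ts] := eqVneq t s.
    subst s; rewrite e1 in e3; have xy := addIr _ e3; subst y.
    by rewrite (Af _ _ _ Ax Ay).
  exfalso; apply: nz.
  have tsz : (t - s) *: z = y - x.
    have e : x + t *: z = y + s *: z by rewrite -e1 e3.
    have -> : y = x + t *: z - s *: z by rewrite e addrK.
    by rewrite scalerBl -[x + t *: z - s *: z]addrA [RHS]addrC addKr.
  have ts0 : t - s != 0 by rewrite subr_eq0.
  exists ((t - s)^-1 * (- a + b)).
  have -> : z = (t - s)^-1 *: (-1 *: x + y).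
    by rewrite scaleN1r [- x + y]addrC -tsz scalerA mulVf // scale1r.
  apply: Asc; rewrite -[- a]mulN1r; exact: Al.
- move=> _ _ [x [a [t [Ax [/= -> ->]]]]].
  have [t0|t0] := eqVneq t 0.
    by subst t; rewrite scale0r addr0 mul0r addr0; exact: Ad.
  have [tlt|tge] := ltP t 0.
    set u := - t; have u0 : 0 < u by rewrite /u oppr_gt0.
    have := c_ge _ _ (Asc u^-1 _ _ Ax).
    have -> : `|u^-1 *: x - z| = u^-1 * `|x + t *: z|.
      have -> : u^-1 *: x - z = u^-1 *: (x + t *: z).
        by rewrite scalerDr scalerA /u invrN mulNr mulVf // scaleN1r.
      by rewrite normrZ gtr0_norm // invr_gt0.
    rewrite -mulrBr => h.
    rewrite -(ler_pM2l u0) mulrA mulfV ?gt_eqF // mul1r /u in h.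
    rewrite mulNr in h; lra.
  have tgt : 0 < t by rewrite lt_neqAle eq_sym t0.
  have := c_le _ _ (Asc t^-1 _ _ Ax).
  have -> : `|t^-1 *: x + z| = t^-1 * `|x + t *: z|.
    have -> : t^-1 *: x + z = t^-1 *: (x + t *: z).
      by rewrite scalerDr scalerA mulVf // scale1r.
    by rewrite normrZ gtr0_norm // invr_gt0.
  rewrite -mulrBr => h.
  rewrite -(ler_pM2l tgt) mulrA mulfV ?gt_eqF // mul1r in h.
  lra.
Qed.


Definition line := [set p : X * R | exists t, p.1 = t *: w /\ p.2 = t * `|w|].

Lemma line_good : w != 0 -> good line.
Proof.
move=> w0; split.
- by exists 1; rewrite scale1r mul1r.
- move=> k x0 a0 y0 b0 [t [/= -> ->]] [s [/= -> ->]].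
  by exists (k * t + s) => /=; rewrite scalerDl scalerA mulrDl mulrA.
- move=> x0 a b [t [/= e1 ->]] [s [/= e2 ->]].
  have : (t - s) *: w == 0 by rewrite scalerBl -e1 -e2 subrr.
  by rewrite scaler_eq0 (negbTE w0) orbF subr_eq0 => /eqP ->.
- move=> x0 a [t [/= -> ->]]; rewrite normrZ.
  by apply: ler_wpM2r => //; exact: ler_norm.
Qed.

Lemma HB_sep : w != 0 -> exists f : X -> R,
  [/\ (forall (a : R) (x y : X), f (a *: x + y) = a * f x + f y),
     continuous f & f w = `|w|].
Proof.
move=> w0.
have [A [PA maxA]] := @Zorn_bigcup _ (fun S => S = set0 \/ good S) (@chain_ok).
have gA : good A.
  case: PA => // A0; exfalso; apply: (maxA line); last by right; exact: line_good.
  rewrite A0; split => // Lsub.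
  have := Lsub (w, `|w|); rewrite /set0 /=; apply.
  by exists 1; rewrite scale1r mul1r.
have dom : forall x, exists a, A (x, a).
  move=> x; apply: contrapT => nx; have [B [AB gB]] := extend A x gA nx.
  by apply: (maxA B AB); right.
have [f Af] := choice dom.
have [Aw Al Afun Ad] := gA.
have flin a x y : f (a *: x + y) = a * f x + f y.
  exact: Afun (Af _) (Al a _ _ _ _ (Af x) (Af y)).
have f0 : f 0 = 0 := Afun _ _ _ (Af 0) (good0 A gA).
have fN x : f (- x) = - f x.
  by have := flin (-1) x 0; rewrite scaleN1r addr0 f0 addr0 mulN1r.
have fB x y : f (x - y) = f x - f y.
  by have := flin 1 x (- y); rewrite scale1r mul1r fN.
have fb x : `|f x| <= `|x|.
  rewrite ler_norml Ad ?Af // andbT lerNl -fN -[X in _ <= X]normrN.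
  exact: Ad (Af _).
exists f; split => //.
- move=> x; apply/cvgrPdist_le => e e0.
  have /cvgrPdist_le/(_ e e0) := @cvg_id _ (nbhs x).
  apply: filterS => y hy; rewrite -fB; exact: le_trans (fb _) hy.
- exact: Afun (Af w) Aw.
Qed.

End HBsec.

Set Implicit Arguments. Unset Strict Implicit.

Section Aux.
Variables (R : realType) (X : completeNormedModType R).

Lemma lin_add (g : X -> X) : lin_op g -> forall x y, g (x + y) = g x + g y.
Proof. by move=> hg x y; have := hg 1 x y; rewrite !scale1r. Qed.

Lemma lin_0 (g : X -> X) : lin_op g -> g 0 = 0.
Proof.
move=> hg; have := hg 1 0 0; rewrite !scale1r addr0 => h.
by apply: (@addrI _ (g 0)); rewrite addr0 -h.
Qed.

Lemma lin_N (g : X -> X) : lin_op g -> forall x, g (- x) = - g x.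
Proof. by move=> hg x; have := hg (-1) x 0; rewrite !addr0 !scaleN1r lin_0 // addr0. Qed.

Lemma lin_B (g : X -> X) : lin_op g -> forall x y, g (x - y) = g x - g y.
Proof. by move=> hg x y; rewrite lin_add // lin_N. Qed.

Lemma clf_0 (f : X -> R) : cont_lin_functional f -> f 0 = 0.
Proof.
case=> hf _; have := hf 1 0 0; rewrite scale1r addr0 mul1r => h.
by apply: (@addrI _ (f 0)); rewrite addr0 -h.
Qed.

Lemma clf_B (f : X -> R) : cont_lin_functional f -> forall x y, f (x - y) = f x - f y.
Proof.
move=> cf x y; have [hf _] := cf.
have := hf (-1) y x; rewrite scaleN1r mulN1r [- y + x]addrC => ->.
by rewrite addrC.
Qed.

Lemma clf_D (f : X -> R) : cont_lin_functional f -> forall x y, f (x + y) = f x + f y.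
Proof. by case=> hf _ x y; have := hf 1 x y; rewrite scale1r mul1r. Qed.

Lemma subseq_ge phi : subseq_idx phi -> forall n, (n <= phi n)%N.
Proof.
move=> hp; elim=> // n IH; apply: leq_ltn_trans IH _; exact: hp.
Qed.

Lemma weak_sub (u : nat -> X) w phi : weak_cvg u w -> subseq_idx phi ->
  weak_cvg (fun j => u (phi j)) w.
Proof.
move=> hu hp f cf.
have phiy : phi @ \oo --> \oo.
  apply/cvgnyPge => A; near=> n; apply: (@le_trans _ _ n); last exact: subseq_ge.
  by near: n; exact: nbhs_infty_ge.
exact: (cvg_comp _ _ phiy (hu f cf)).
Unshelve. all: end_near. Qed.

Lemma weak_uniq (u : nat -> X) a b : weak_cvg u a -> weak_cvg u b ->
  forall f, cont_lin_functional f -> f a = f b.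
Proof.
move=> ha hb f cf; exact: (cvg_unique _ (ha f cf) (hb f cf)).
Qed.

End Aux.

Theorem mainTheorem5 (R : realType) (X : completeNormedModType R)
  (G : set (X -> X)) (u : nat -> X)
  (g1 g2 h1 h2 : nat -> X -> X) (w1 w2 : X) :
  dislocation_space G -> reflexive_space X ->
  (exists M : R, forall n, `|u n| <= M) ->
  (forall n, g1 n \in G) -> (forall n, g2 n \in G) ->
  (forall n, cancel (g1 n) (h1 n) /\ cancel (h1 n) (g1 n)) ->
  (forall n, cancel (g2 n) (h2 n) /\ cancel (h2 n) (g2 n)) ->
  weak_cvg (fun n => h1 n (u n)) w1 ->
  weak_cvg (fun n => h2 n (u n - g1 n w1)) w2 ->
  w2 != 0 ->
  op_weak_cvg (fun n => h1 n \o g2 n) (fun _ => 0).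
Proof.
move=> [[idG Giso Gcomp Ginv] D1 D2] _ _ g1G g2G c1 c2 wu1 wu2 w20.
have h1G n : h1 n \in G by apply: (Ginv (g1 n)) => //; case: (c1 n).
have h2G n : h2 n \in G by apply: (Ginv (g2 n)) => //; case: (c2 n).
pose K n := h1 n \o g2 n; pose Ki n := h2 n \o g1 n.
have KG n : K n \in G by exact: Gcomp.
have KiG n : Ki n \in G by exact: Gcomp.
have KiK n y : Ki n (K n y) = y.
  by rewrite /Ki /K /= (c1 n).2 (c2 n).1.
apply: contrapT => nK.
have [phi [phiI [A [Ab AS]]]] := D1 _ KG nK.
have nKi : ~ op_weak_cvg (fun j => Ki (phi j)) (fun _ => 0).
  move=> Hw; apply: nK => v f cf.
  suff f0 : forall y, f y = 0.
    rewrite f0; under eq_fun do rewrite f0; exact: cvg_cst.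
  move=> y.
  have [liKi isoKi _] := Giso _ (KiG (phi 0%N)).
  have cA : (fun j => f (Ki (phi j) (A y))) @ \oo --> 0.
    by rewrite -(clf_0 cf); exact: (Hw (A y) f cf).
  have dc : (fun j => Ki (phi j) (K (phi j) y - A y)) @ \oo --> (0 : X).
    apply/cvgrPdist_le => e e0.
    have /cvgrPdist_le/(_ e e0) := AS y.
    apply: filterS => j hj; rewrite sub0r normrN.
    have [_ -> _] := Giso _ (KiG (phi j)).
    by rewrite distrC.
  have c2' : (fun j => f (Ki (phi j) (K (phi j) y - A y))) @ \oo --> 0.
    rewrite -(clf_0 cf); exact: (cvg_comp _ _ dc (cf.2 0)).
  have e : (fun _ : nat => f y) =
      (fun j => f (Ki (phi j) (A y)) + f (Ki (phi j) (K (phi j) y - A y))).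
    apply/funext => j; rewrite -clf_D //.
    have [lj _ _] := Giso _ (KiG (phi j)).
    by rewrite -lin_add // addrC subrK KiK.
  have : (fun _ : nat => f y) @ \oo --> 0 + 0 by rewrite e; exact: cvgD cA c2'.
  rewrite addr0 => h; exact: (cvg_unique _ (cvg_cst (f y)) h).
have wu' : weak_cvg (fun j => h1 (phi j) (u (phi j)) - w1) 0.
  move=> f cf; rewrite clf_0 //.
  have := weak_sub wu1 phiI cf => h.
  under eq_fun do rewrite clf_B //.
  by rewrite -(subrr (f w1)); apply: cvgB => //; exact: cvg_cst.
have KiG' j : Ki (phi j) \in G by [].
have [psi [psiI Hpsi]] := D2 _ _ KiG' nKi wu'.
have E n : Ki n (h1 n (u n) - w1) = h2 n (u n - g1 n w1).
  have [l1 _ _] := Giso _ (g1G n).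
  by rewrite /Ki /= lin_B // (c1 n).2.
have W := weak_sub (weak_sub wu2 phiI) psiI.
have [f [fl fc fw]] := @HB_sep R X w2 w20.
have cf : cont_lin_functional f by split.
have ee : (fun j => Ki (phi (psi j)) (h1 (phi (psi j)) (u (phi (psi j))) - w1)) =
  (fun j => h2 (phi (psi j)) (u (phi (psi j)) - g1 (phi (psi j)) w1)).
  by apply/funext => j; exact: E.
rewrite ee in Hpsi.
have := weak_uniq W Hpsi cf; rewrite fw clf_0 // => /eqP.
by rewrite normr_eq0 (negbTE w20).
Qed.
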